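(* Let $G$ be the graph defined in the context. For every pair $\{x,y\}$ of distinct vertices of $G$ that are not adjacent in $G$, the graph obtained from $G$ by adding the edge $xy$ contains an induced subgraph isomorphic to $P_6$.
   Context: $P_n$ denotes the path on $n$ vertices. Let $\mathbb{F}=\mathbb{F}_2[\alpha]/(\alpha^4+\alpha+1)$ be the field with 16 elements. Let $S=\{x^3: x\in\mathbb{F}^\times\}=\{1,\alpha^3,\alpha^2+\alpha^3,\alpha+\alpha^3,1+\alpha+\alpha^2+\alpha^3\}$ be the set of nonzero cubes. Let $G$ be the graph with vertex set $\mathbb{F}$ in which distinct $x,y$ are adjacent if and only if $x-y\in S$. *)

(* Defs.v *)
From mathcomp Require Import all_boot.
Set Implicit Arguments. Unset Strict Implicit. Unset Printing Implicit Defensive.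

(* The field F_16 = F_2[a]/(a^4+a+1): an element (((c0,c1),c2),c3)
   represents c0 + c1 a + c2 a^2 + c3 a^3 (coefficients in F_2 = bool,
   addition = xor, multiplication = and). *)
Definition F16 : finType := (bool * bool * bool * bool)%type.

Definition zeroF : F16 := (false, false, false, false).
Definition oneF : F16 := (true, false, false, false).

Definition addF (x y : F16) : F16 :=
  let: (a0, a1, a2, a3) := x in
  let: (b0, b1, b2, b3) := y in
  (addb a0 b0, addb a1 b1, addb a2 b2, addb a3 b3).

(* In characteristic 2, x - y = x + (-y) with -y = y. *)
Definition oppF (x : F16) : F16 := x.
Definition subF (x y : F16) : F16 := addF x (oppF y).

(* Polynomial product followed by reduction using a^4 = a + 1,
   a^5 = a^2 + a, a^6 = a^3 + a^2. *)
Definition mulF (x y : F16) : F16 :=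
  let: (a0, a1, a2, a3) := x in
  let: (b0, b1, b2, b3) := y in
  let c0 := a0 && b0 in
  let c1 := addb (a0 && b1) (a1 && b0) in
  let c2 := addb (addb (a0 && b2) (a1 && b1)) (a2 && b0) in
  let c3 := addb (addb (a0 && b3) (a1 && b2)) (addb (a2 && b1) (a3 && b0)) in
  let c4 := addb (addb (a1 && b3) (a2 && b2)) (a3 && b1) in
  let c5 := addb (a2 && b3) (a3 && b2) in
  let c6 := a3 && b3 in
  (addb c0 c4, addb (addb c1 c4) c5, addb (addb c2 c5) c6, addb c3 c6).

Definition cubeF (x : F16) : F16 := mulF x (mulF x x).

Definition S : {set F16} := [set cubeF x | x in [set x : F16 | x != zeroF]].

Definition adjG : rel F16 := fun x y => (x != y) && (subF x y \in S).

Definition add_edge (T : eqType) (e : rel T) (x y : T) : rel T :=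
  fun u v => [|| e u v, (u == x) && (v == y) | (u == y) && (v == x)].

Definition path_adj (n : nat) : rel 'I_n :=
  fun i j => (i.+1 == j :> nat) || (j.+1 == i :> nat).

Definition has_induced_path (T : finType) (e : rel T) (n : nat) : Prop :=
  exists f : 'I_n -> T, injective f /\ forall i j, e (f i) (f j) = path_adj i j.

(* Main.v *)
Require Import Defs.
From mathcomp Require Import all_boot.
Definition ofN (n : nat) : F16 := (odd n, odd (n./2), odd (n./2./2), odd (n./2./2./2)).
Definition allF : seq F16 := [seq ofN n | n <- iota 0 16].
Lemma allF_all z : z \in allF. Proof. by case: z => [[[[] []] []] []]. Qed.
Definition Sl : seq F16 := [seq cubeF x | x <- allF & x != zeroF].
Lemma inS z : (z \in S) = (z \in Sl).
Proof.
apply/imsetP/mapP => [[x]|[x]].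
  by rewrite inE => nz ->; exists x; rewrite // mem_filter nz allF_all.
by rewrite mem_filter => /andP[nz _] ->; exists x; rewrite // inE.
Qed.

Definition adjB (x y : F16) := (x != y) && (subF x y \in Sl).
Lemma adjGB : adjG =2 adjB. Proof. by move=> x y; rewrite /adjG /adjB inS. Qed.

Definition table : seq (nat * seq nat) :=
  [:: (2, [:: 0; 2; 3; 9; 5; 4]); (3, [:: 0; 3; 2; 13; 5; 4]);
      (4, [:: 0; 4; 5; 9; 3; 2]); (5, [:: 0; 5; 4; 11; 3; 2]);
      (6, [:: 0; 6; 7; 11; 3; 2]); (7, [:: 0; 7; 6; 9; 3; 2]);
      (9, [:: 0; 9; 3; 2; 13; 7]); (11, [:: 0; 11; 3; 2; 13; 5]);
      (13, [:: 0; 13; 2; 3; 9; 6]); (14, [:: 0; 14; 2; 3; 9; 5])].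

Definition wit (d : F16) : seq F16 :=
  map ofN (head [::] [seq p.2 | p <- table & ofN p.1 == d]).

Definition seqw (x y : F16) : seq F16 := map (addF x) (wit (subF y x)).

Definition good (x y : F16) : bool :=
  let s := seqw x y in
  [&& size s == 6, uniq s &
   all (fun i => all (fun j =>
      add_edge adjB x y (nth zeroF s i) (nth zeroF s j) == ((i.+1 == j) || (j.+1 == i)))
      (iota 0 6)) (iota 0 6)].

Lemma all_good : all (fun x => all (fun y => ((x != y) && ~~ adjB x y) ==> good x y) allF) allF.
Proof. vm_compute. reflexivity. Qed.

Theorem claim2 : forall x y : F16, x != y -> ~~ adjG x y ->
  has_induced_path (add_edge adjG x y) 6.
Proof.
move=> x y nxy nadj.
have := allP (allP all_good x (allF_all x)) y (allF_all y).
rewrite nxy -adjGB nadj /= => /and3P [/eqP sz un /allP H].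
exists (fun i : 'I_6 => nth zeroF (seqw x y) i); split.
  move=> i j /eqP; rewrite nth_uniq ?sz // => /eqP eij; exact: val_inj.
move=> i j; have := H i; rewrite mem_iota add0n => /(_ (ltn_ord i)) Hi.
have := allP Hi j; rewrite mem_iota add0n => /(_ (ltn_ord j)) /eqP E.
by rewrite /path_adj -E /add_edge !adjGB.
Qed.
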